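(* Let $N\ge 1$ and let the data consist of $(Y_i,D_i,Z_i,X_i)$, $i=1,\dots,N$, with $Y_i\in\mathbb{R}$, $D_i,Z_i\in\{0,1\}$, and let $p$ be a fixed (known) function with values in $(0,1)$; write $p_i=p(X_i)$. Define $\kappa_{i1}=D_i\frac{Z_i-p_i}{p_i(1-p_i)}$, $\kappa_{i0}=(1-D_i)\frac{(1-Z_i)-(1-p_i)}{p_i(1-p_i)}$, $\kappa_i=1-\frac{D_i(1-Z_i)}{1-p_i}-\frac{(1-D_i)Z_i}{p_i}$, and the estimators $$\hat\tau_a=\Big[\sum_i\kappa_i\Big]^{-1}\sum_i Y_i\frac{Z_i-p_i}{p_i(1-p_i)},\quad \hat\tau_{a,1}=\Big[\sum_i\kappa_{i1}\Big]^{-1}\sum_i Y_i\frac{Z_i-p_i}{p_i(1-p_i)},\quad \hat\tau_{a,0}=\Big[\sum_i\kappa_{i0}\Big]^{-1}\sum_i Y_i\frac{Z_i-p_i}{p_i(1-p_i)},$$ $$\hat\tau_t=\Big[\sum_i\frac{D_iZ_i}{p_i}-\sum_i\frac{D_i(1-Z_i)}{1-p_i}\Big]^{-1}\Big[\sum_i\frac{Y_iZ_i}{p_i}-\sum_i\frac{Y_i(1-Z_i)}{1-p_i}\Big],$$ $$\hat\tau_{a,10}=\Big[\sum_i\kappa_{i1}\Big]^{-1}\sum_i\kappa_{i1}Y_i-\Big[\sum_i\kappa_{i0}\Big]^{-1}\sum_i\kappa_{i0}Y_i,$$ $$\hat\tau_{t,norm}=\frac{\big[\sum_i\frac{Z_i}{p_i}\big]^{-1}\sum_i\frac{Y_iZ_i}{p_i}-\big[\sum_i\frac{1-Z_i}{1-p_i}\big]^{-1}\sum_i\frac{Y_i(1-Z_i)}{1-p_i}}{\big[\sum_i\frac{Z_i}{p_i}\big]^{-1}\sum_i\frac{D_iZ_i}{p_i}-\big[\sum_i\frac{1-Z_i}{1-p_i}\big]^{-1}\sum_i\frac{D_i(1-Z_i)}{1-p_i}}$$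 (each considered where its denominators are nonzero). Then $\hat\tau_{t,norm}$ and $\hat\tau_{a,10}$ are translation invariant and scale invariant with respect to the natural logarithm, whereas $\hat\tau_a$, $\hat\tau_t$ ($=\hat\tau_{a,1}$) and $\hat\tau_{a,0}$ are not translation invariant and not scale invariant with respect to the natural logarithm.
   Context: Write $\mathbf{Y}=(Y_1,\dots,Y_N)$ and $\mathbf{W}$ for the remaining data $(D_i,Z_i,X_i)_{i=1}^N$, and view an estimator as a function $\hat\tau(\mathbf{Y},\mathbf{W})$. An estimator is translation invariant if $\hat\tau(\mathbf{Y},\mathbf{W})=\hat\tau(\mathbf{Y}+k,\mathbf{W})$ for all $\mathbf{Y}$, $\mathbf{W}$ and real $k$ (where $\mathbf{Y}+k$ adds $k$ to every coordinate). An estimator is scale invariant with respect to the natural logarithm if $\hat\tau(\log\mathbf{Y},\mathbf{W})=\hat\tau(\log(a\mathbf{Y}),\mathbf{W})$ for all $\mathbf{Y}>0$ (coordinatewise), all $\mathbf{W}$ and all $a>0$, where $\log$ is applied coordinatewise. ''Not translation invariant / not scale invariant'' means these identities fail for some admissible data and some $k$ (resp. $a$). *)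

(* Defs.v *)
From HB Require Import structures.
From mathcomp Require Import all_boot all_order all_algebra.
From mathcomp Require Import reals exp.
Set Implicit Arguments. Unset Strict Implicit. Unset Printing Implicit Defensive.
Import Order.TTheory GRing.Theory Num.Theory.
Local Open Scope ring_scope.

Section Estimators.
Variables (R : realType) (T : Type) (N : nat) (p : T -> R).
Implicit Types (Y : 'I_N -> R) (D Z : 'I_N -> bool) (X : 'I_N -> T).

Definition pi X (i : 'I_N) : R := p (X i).

Definition kappa1 D Z X i : R :=
  (D i)%:R * (((Z i)%:R - pi X i) / (pi X i * (1 - pi X i))).
Definition kappa0 D Z X i : R :=
  (1 - (D i)%:R) * (((1 - (Z i)%:R) - (1 - pi X i)) / (pi X i * (1 - pi X i))).
Definition kappa D Z X i : R :=
  1 - (D i)%:R * (1 - (Z i)%:R) / (1 - pi X i) - (1 - (D i)%:R) * (Z i)%:R / pi X i.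

Definition ipw_num Y Z X : R :=
  \sum_(i < N) Y i * (((Z i)%:R - pi X i) / (pi X i * (1 - pi X i))).

Definition tau_a Y D Z X : R := (\sum_(i < N) kappa D Z X i)^-1 * ipw_num Y Z X.
Definition tau_a1 Y D Z X : R := (\sum_(i < N) kappa1 D Z X i)^-1 * ipw_num Y Z X.
Definition tau_a0 Y D Z X : R := (\sum_(i < N) kappa0 D Z X i)^-1 * ipw_num Y Z X.

Definition tau_t_den D Z X : R :=
  \sum_(i < N) (D i)%:R * (Z i)%:R / pi X i
  - \sum_(i < N) (D i)%:R * (1 - (Z i)%:R) / (1 - pi X i).
Definition tau_t Y D Z X : R :=
  (tau_t_den D Z X)^-1 *
  (\sum_(i < N) Y i * (Z i)%:R / pi X i
   - \sum_(i < N) Y i * (1 - (Z i)%:R) / (1 - pi X i)).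

Definition tau_a10 Y D Z X : R :=
  (\sum_(i < N) kappa1 D Z X i)^-1 * (\sum_(i < N) kappa1 D Z X i * Y i)
  - (\sum_(i < N) kappa0 D Z X i)^-1 * (\sum_(i < N) kappa0 D Z X i * Y i).

Definition sZ Z X : R := \sum_(i < N) (Z i)%:R / pi X i.
Definition s1Z Z X : R := \sum_(i < N) (1 - (Z i)%:R) / (1 - pi X i).
Definition tau_tnorm_den D Z X : R :=
  (sZ Z X)^-1 * (\sum_(i < N) (D i)%:R * (Z i)%:R / pi X i)
  - (s1Z Z X)^-1 * (\sum_(i < N) (D i)%:R * (1 - (Z i)%:R) / (1 - pi X i)).
Definition tau_tnorm Y D Z X : R :=
  ((sZ Z X)^-1 * (\sum_(i < N) Y i * (Z i)%:R / pi X i)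
   - (s1Z Z X)^-1 * (\sum_(i < N) Y i * (1 - (Z i)%:R) / (1 - pi X i)))
  / tau_tnorm_den D Z X.

Definition def_a D Z X := \sum_(i < N) kappa D Z X i != 0.
Definition def_a1 D Z X := \sum_(i < N) kappa1 D Z X i != 0.
Definition def_a0 D Z X := \sum_(i < N) kappa0 D Z X i != 0.
Definition def_t D Z X := tau_t_den D Z X != 0.
Definition def_a10 D Z X := def_a1 D Z X && def_a0 D Z X.
Definition def_tnorm D Z X :=
  [&& sZ Z X != 0, s1Z Z X != 0 & tau_tnorm_den D Z X != 0].

Definition estimator := ('I_N -> R) -> ('I_N -> bool) -> ('I_N -> bool) -> ('I_N -> T) -> R.

(* Invariance notions, restricted to data where the estimator is defined. *)
Definition translation_invariant (adm : ('I_N -> bool) -> ('I_N -> bool) -> ('I_N -> T) -> bool)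
  (est : estimator) : Prop :=
  forall Y D Z X, adm D Z X -> forall k : R,
    est Y D Z X = est (fun i => Y i + k) D Z X.

Definition log_scale_invariant (adm : ('I_N -> bool) -> ('I_N -> bool) -> ('I_N -> T) -> bool)
  (est : estimator) : Prop :=
  forall Y D Z X, adm D Z X -> (forall i, 0 < Y i) -> forall a : R, 0 < a ->
    est (fun i => ln (Y i)) D Z X = est (fun i => ln (a * Y i)) D Z X.

End Estimators.

(* Main.v *)
Require Import Defs.
From HB Require Import structures.
From mathcomp Require Import all_boot all_order all_algebra.
From mathcomp Require Import reals exp.
From mathcomp Require Import ring.
Import Order.TTheory GRing.Theory Num.Theory.
Local Open Scope ring_scope.

Section Aux.
Variables (R : realType) (T : Type) (N : nat) (p : T -> R).

Lemma not_inv (adm : ('I_N -> bool) -> ('I_N -> bool) -> ('I_N -> T) -> bool)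
  (est : estimator R T N) D Z X (m : R) :
  adm D Z X -> m != 0 -> (forall c, est (fun _ => c) D Z X = c * m) ->
  ~ translation_invariant adm est /\ ~ log_scale_invariant adm est.
Proof.
move=> hadm hm hc; split.
- move=> H; have := H (fun _ => 0) D Z X hadm 1.
  have -> : (fun i : 'I_N => (fun _ => (0:R)) i + 1) = (fun _ => 1).
    by apply: boolp.funext => i /=; rewrite add0r.
  rewrite !hc mul0r mul1r => /eqP; rewrite eq_sym; exact/negP.
- move=> H; have := H (fun _ => 1) D Z X hadm (fun _ => ltr01) 2 (ltr0Sn _ 1).
  have -> : (fun i : 'I_N => ln ((fun _ => (1:R)) i)) = (fun _ => 0).
    by apply: boolp.funext => i /=; rewrite ln1.
  have -> : (fun i : 'I_N => ln (2 * (fun _ => (1:R)) i)) = (fun _ => ln 2).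
    by apply: boolp.funext => i /=; rewrite mulr1.
  rewrite !hc mul0r => /eqP; rewrite eq_sym mulf_eq0 (negbTE hm) orbF.
  by rewrite ln_eq0 // => /eqP; apply/eqP; rewrite pnatr_eq1.
Qed.

Lemma sum_shift (Y : 'I_N -> R) (a b : 'I_N -> R) (k : R) :
  \sum_(i < N) (Y i + k) * a i / b i =
  \sum_(i < N) Y i * a i / b i + k * \sum_(i < N) a i / b i.
Proof.
rewrite mulr_sumr -big_split; apply: eq_bigr => i _ /=.
by rewrite !mulrDl mulrA.
Qed.

Lemma sum_shift2 (Y : 'I_N -> R) (w : 'I_N -> R) (k : R) :
  \sum_(i < N) w i * (Y i + k) =
  \sum_(i < N) w i * Y i + k * \sum_(i < N) w i.
Proof.
rewrite mulr_sumr -big_split; apply: eq_bigr => i _ /=.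
by rewrite mulrDr [k * _]mulrC.
Qed.

End Aux.

Ltac solve_eq a b q0 q1 q2 :=
  move: q0 q1 q2; move: a b => ? ? ? ? ?; field; repeat (apply/andP; split); assumption.

Theorem proposition1 (R : realType) (T : Type) (x0 : T) (N : nat) (p : T -> R)
  (hN : (1 <= N)%N) (hp : forall x, 0 < p x < 1) :
  (* tau_t_norm and tau_a10 are invariant *)
  translation_invariant (@def_tnorm R T N p) (@tau_tnorm R T N p) /\
  log_scale_invariant (@def_tnorm R T N p) (@tau_tnorm R T N p) /\
  translation_invariant (@def_a10 R T N p) (@tau_a10 R T N p) /\
  log_scale_invariant (@def_a10 R T N p) (@tau_a10 R T N p) /\
  (* tau_t = tau_a1 *)
  (forall Y D Z X, @def_t R T N p D Z X ->
     @tau_t R T N p Y D Z X = @tau_a1 R T N p Y D Z X) /\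
  (* tau_a, tau_t (= tau_a1), tau_a1 and tau_a0 are not invariant *)
  ~ translation_invariant (@def_a R T N p) (@tau_a R T N p) /\
  ~ log_scale_invariant (@def_a R T N p) (@tau_a R T N p) /\
  ~ translation_invariant (@def_t R T N p) (@tau_t R T N p) /\
  ~ log_scale_invariant (@def_t R T N p) (@tau_t R T N p) /\
  ~ translation_invariant (@def_a1 R T N p) (@tau_a1 R T N p) /\
  ~ log_scale_invariant (@def_a1 R T N p) (@tau_a1 R T N p) /\
  ~ translation_invariant (@def_a0 R T N p) (@tau_a0 R T N p) /\
  ~ log_scale_invariant (@def_a0 R T N p) (@tau_a0 R T N p).
Proof.
have pne0 x : p x != 0 by have /andP[h _] := hp x; rewrite gt_eqF.
have p1ne0 x : 1 - p x != 0 by have /andP[_ h] := hp x; rewrite subr_eq0 eq_sym lt_eqF.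
have Nne0 : (N%:R : R) != 0 by rewrite pnatr_eq0 -lt0n.
have TIn : translation_invariant (@def_tnorm R T N p) (@tau_tnorm R T N p).
  move=> Y D Z X /and3P[h1 h2 _] k; rewrite /tau_tnorm !sum_shift -/(sZ p Z X).
  rewrite -/(s1Z p Z X); congr (_ / _).
  by rewrite !mulrDr ![_^-1 * (k * _)]mulrCA !mulVf // !mulr1 opprD addrACA subrr addr0.
have TIa : translation_invariant (@def_a10 R T N p) (@tau_a10 R T N p).
  move=> Y D Z X /andP[h1 h2] k; rewrite /tau_a10 !sum_shift2.
  by rewrite !mulrDr ![_^-1 * (k * _)]mulrCA !mulVf // !mulr1 opprD addrACA subrr addr0.
have logof (est : estimator R T N) adm : translation_invariant adm est ->
    log_scale_invariant adm est.
  move=> H Y D Z X hadm hY a ha.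
  have e : (fun i => ln (a * Y i)) = (fun i => ln (Y i) + ln a).
    apply: boolp.funext => i.
    have h : ln (a * Y i) = ln a + ln (Y i).
      by apply: lnM; rewrite posrE.
    by rewrite h addrC.
  rewrite e.
  exact: (H (fun i => ln (Y i)) D Z X hadm (ln a)).
split; first exact: TIn. split; first exact: logof.
split; first exact: TIa. split; first exact: logof.
split.
  move=> Y D Z X _; rewrite /tau_t /tau_a1 /tau_t_den /ipw_num -!sumrB.
  congr (_^-1 * _); apply: eq_bigr => i _; rewrite /kappa1 /Defs.pi.
  - move: (pne0 (X i)) (p1ne0 (X i)); move: ((D i)%:R) ((Z i)%:R) (p (X i)) => d z q h1 h2.
    by field; rewrite h1 h2.
  - move: (pne0 (X i)) (p1ne0 (X i)); move: (Y i) ((Z i)%:R) (p (X i)) => d z q h1 h2.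
    by field; rewrite h1 h2.
pose X := fun _ : 'I_N => x0.
pose Dt := fun _ : 'I_N => true.
pose Df := fun _ : 'I_N => false.
have q0 := pne0 x0. have q1 := p1ne0 x0.
have cst (c : R) : \sum_(i < N) c = c * N%:R by rewrite sumr_const card_ord mulr_natr.
have vN : (N%:R / p x0) != 0 by rewrite mulf_neq0 // invr_eq0.
have vNn : - (N%:R / p x0) != 0 by rewrite oppr_eq0.
have neq_val (x v : R) : x = v -> v != 0 -> x != 0 by move=> ->.
have Ha : ~ translation_invariant (@def_a R T N p) (@tau_a R T N p) /\
  ~ log_scale_invariant (@def_a R T N p) (@tau_a R T N p).
  apply: (@not_inv R T N _ _ Dt Dt X (p x0)^-1).
  - rewrite /def_a /kappa /Defs.pi /Dt /X /= !cst; apply: (neq_val _ (N%:R) _ Nne0).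
    solve_eq (p x0) (N%:R : R) q0 q1 Nne0.
  - by rewrite invr_eq0.
  - move=> c; rewrite /tau_a /ipw_num /kappa /Defs.pi /Dt /X /= !cst.
    solve_eq (p x0) (N%:R : R) q0 q1 Nne0.
have Ht : ~ translation_invariant (@def_t R T N p) (@tau_t R T N p) /\
  ~ log_scale_invariant (@def_t R T N p) (@tau_t R T N p).
  apply: (@not_inv R T N _ _ Dt Dt X 1).
  - rewrite /def_t /tau_t_den /Defs.pi /Dt /X /= !cst; apply: (neq_val _ _ _ vN).
    solve_eq (p x0) (N%:R : R) q0 q1 Nne0.
  - exact: oner_neq0.
  - move=> c; rewrite /tau_t /tau_t_den /Defs.pi /Dt /X /= !cst.
    solve_eq (p x0) (N%:R : R) q0 q1 Nne0.
have Ha1 : ~ translation_invariant (@def_a1 R T N p) (@tau_a1 R T N p) /\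
  ~ log_scale_invariant (@def_a1 R T N p) (@tau_a1 R T N p).
  apply: (@not_inv R T N _ _ Dt Dt X 1).
  - rewrite /def_a1 /kappa1 /Defs.pi /Dt /X /= !cst; apply: (neq_val _ _ _ vN).
    solve_eq (p x0) (N%:R : R) q0 q1 Nne0.
  - exact: oner_neq0.
  - move=> c; rewrite /tau_a1 /ipw_num /kappa1 /Defs.pi /Dt /X /= !cst.
    solve_eq (p x0) (N%:R : R) q0 q1 Nne0.
have Ha0 : ~ translation_invariant (@def_a0 R T N p) (@tau_a0 R T N p) /\
  ~ log_scale_invariant (@def_a0 R T N p) (@tau_a0 R T N p).
  apply: (@not_inv R T N _ _ Df Dt X (-1)).
  - rewrite /def_a0 /kappa0 /Defs.pi /Df /Dt /X /= !cst; apply: (neq_val _ _ _ vNn).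
    solve_eq (p x0) (N%:R : R) q0 q1 Nne0.
  - by rewrite oppr_eq0 oner_neq0.
  - move=> c; rewrite /tau_a0 /ipw_num /kappa0 /Defs.pi /Df /Dt /X /= !cst.
    solve_eq (p x0) (N%:R : R) q0 q1 Nne0.
by case: Ha => ? ?; case: Ht => ? ?; case: Ha1 => ? ?; case: Ha0 => ? ?.
Qed.
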